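(* Let $M,K$ be symmetric positive definite $d\times d$ matrices and $H(q,p)=\frac12p^TM^{-1}p+\frac12q^TKq$. Write $M=LL^T$ and $U^TL^{-1}KL^{-T}U=\Omega^2=\mathrm{diag}(\omega_1^2,\dots,\omega_d^2)$ with $U$ orthogonal and $\omega_i>0$, and introduce modal variables by $q=L^{-T}U\Omega^{-1}Q$, $p=LUP$ (so $H=\frac12\sum_i((P^i)^2+(Q^i)^2)$). For $k>0$ let $\tilde M(k)=\begin{bmatrix}\cos\theta(k)&\chi(k)\sin\theta(k)\\-\chi(k)^{-1}\sin\theta(k)&\cos\theta(k)\end{bmatrix}$ with $\theta(k)\in\mathbb{R}$, $\chi(k)\ne0$, and set $\rho(k)=\frac12(\chi(k)-\chi(k)^{-1})^2$. Suppose a numerical map $\psi_h$ acts in the modal variables by $(Q^i,P^i)\mapsto\tilde M(\omega_ih)(Q^i,P^i)^T$ independently for each $i$ (as is the case for a consistent reversible volume-preserving integrator such as a palindromic splitting method applied with stable step size $h$, $\tilde M(k)$ being its one-step matrix with step $k$ for the oscillator $dq/dt=p,dp/dt=-q$). If $(q_0,p_0)$ has density $\propto e^{-H}$ and $(q_n,p_n)=\psi_h^n(q_0,p_0)$, then for every $n$ $$0\le\mathbb{E}\big(H(q_n,p_n)-H(q_0,p_0)\big)\le\sum_{j=1}^d\rho(\omega_jh).$$ *)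

(* Defs.v *)
From Stdlib Require Import Reals List.
Open Scope R_scope.

Fixpoint sum_to (n : nat) (f : nat -> R) : R :=
  match n with O => 0 | S m => sum_to m f + f m end.

(* d x d matrices as functions on indices (only indices < d matter),
   vectors of R^d as functions nat -> R *)
Definition mat := nat -> nat -> R.
Definition vec := nat -> R.

Definition mmul (d : nat) (A B : mat) : mat :=
  fun i j => sum_to d (fun k => A i k * B k j).
Definition tr (A : mat) : mat := fun i j => A j i.
Definition mvec (d : nat) (A : mat) (x : vec) : vec :=
  fun i => sum_to d (fun k => A i k * x k).
Definition idm : mat := fun i j => if Nat.eqb i j then 1 else 0.
Definition diagm (w : vec) : mat := fun i j => if Nat.eqb i j then w i else 0.
Definition quad (d : nat) (A : mat) (x : vec) : R :=
  sum_to d (fun i => x i * mvec d A x i).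

Definition meq (d : nat) (A B : mat) : Prop :=
  forall i j, (i < d)%nat -> (j < d)%nat -> A i j = B i j.

Definition symmetric (d : nat) (A : mat) : Prop :=
  forall i j, (i < d)%nat -> (j < d)%nat -> A i j = A j i.
Definition pos_def (d : nat) (A : mat) : Prop :=
  forall x : vec, (exists i, (i < d)%nat /\ x i <> 0) -> 0 < quad d A x.
Definition spd (d : nat) (A : mat) : Prop := symmetric d A /\ pos_def d A.

Definition is_inverse (d : nat) (A Ainv : mat) : Prop :=
  meq d (mmul d A Ainv) idm /\ meq d (mmul d Ainv A) idm.

Definition orthogonal (d : nat) (U : mat) : Prop :=
  meq d (mmul d (tr U) U) idm /\ meq d (mmul d U (tr U)) idm.

Definition state := (vec * vec)%type.

Definition hamiltonian (d : nat) (Minv K : mat) (z : state) : R :=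
  / 2 * quad d Minv (snd z) + / 2 * quad d K (fst z).

Definition Mtilde_Q (theta chi : R -> R) (k Q P : R) : R :=
  cos (theta k) * Q + chi k * sin (theta k) * P.
Definition Mtilde_P (theta chi : R -> R) (k Q P : R) : R :=
  - / chi k * sin (theta k) * Q + cos (theta k) * P.

Definition rho (chi : R -> R) (k : R) : R := / 2 * (chi k - / chi k) ^ 2.

Definition int_R (g : R -> R) (l : R) : Prop :=
  forall eps, 0 < eps -> exists A, 0 < A /\
    forall a b, a <= - A -> A <= b ->
      exists pr : Riemann_integrable g a b, Rabs (RiemannInt pr - l) < eps.

Fixpoint iter_int (n : nat) (f : list R -> R) (l : R) : Prop :=
  match n with
  | O => l = f nil
  | S m => exists g : R -> R,
      (forall x, iter_int m (fun v => f (x :: v)) (g x)) /\ int_R g l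
  end.

Definition state_of_list (d : nat) (v : list R) : state :=
  (fun i => nth i v 0, fun i => nth (d + i) v 0).

(* gauss_expect d Hm F e : e is the expectation of F(q,p) when (q,p) in R^{2d}
   has density proportional to exp(-Hm(q,p)) (integrals exist). *)
Definition gauss_expect (d : nat) (Hm F : state -> R) (e : R) : Prop :=
  exists Z N,
    iter_int (2 * d) (fun v => exp (- Hm (state_of_list d v))) Z /\
    iter_int (2 * d)
      (fun v => F (state_of_list d v) * exp (- Hm (state_of_list d v))) N /\
    0 < Z /\ e = N / Z.

(* modal coordinates: q = L^{-T} U Omega^{-1} Q, p = L U P, i.e.
   Q = Omega U^T L^T q and P = U^T L^{-1} p *)
Definition modalQ (d : nat) (L U : mat) (om : vec) (q : vec) : vec :=
  fun i => om i * mvec d (tr U) (mvec d (tr L) q) i.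
Definition modalP (d : nat) (Linv U : mat) (p : vec) : vec :=
  fun i => mvec d (tr U) (mvec d Linv p) i.

(* Main.v *)
Require Import Defs.
From Stdlib Require Import Reals List FunctionalExtensionality.
Require Import Defs.
From Stdlib Require Import Reals Lra Lia List.
Open Scope R_scope.

Lemma sum_to_ext n f g : (forall i, (i < n)%nat -> f i = g i) -> sum_to n f = sum_to n g.
Proof. induction n; simpl; intros H; auto. rewrite IHn by (intros; apply H; lia). rewrite H by lia. auto. Qed.

Lemma sum_to_plus n f g : sum_to n (fun i => f i + g i) = sum_to n f + sum_to n g.
Proof. induction n; simpl; [ring|rewrite IHn; ring]. Qed.

Lemma sum_to_minus n f g : sum_to n (fun i => f i - g i) = sum_to n f - sum_to n g.
Proof. induction n; simpl; [ring|rewrite IHn; ring]. Qed.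

Lemma sum_to_scal n c f : sum_to n (fun i => c * f i) = c * sum_to n f.
Proof. induction n; simpl; [ring|rewrite IHn; ring]. Qed.

Lemma sum_to_scal_r n c f : sum_to n (fun i => f i * c) = sum_to n f * c.
Proof. induction n; simpl; [ring|rewrite IHn; ring]. Qed.

Lemma sum_to_zero n : sum_to n (fun _ => 0) = 0.
Proof. induction n; simpl; [ring|rewrite IHn; ring]. Qed.

Lemma sum_to_S_l n f : sum_to (S n) f = f O + sum_to n (fun i => f (S i)).
Proof. induction n; simpl in *; [ring|]. rewrite IHn. ring. Qed.

Lemma sum_to_add n m f : sum_to (n + m) f = sum_to n f + sum_to m (fun i => f (n + i)%nat).
Proof. induction m; simpl. rewrite Nat.add_0_r; ring. rewrite Nat.add_succ_r. simpl. rewrite IHm. ring. Qed.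

Lemma sum_to_swap n m (f : nat -> nat -> R) :
  sum_to n (fun i => sum_to m (fun j => f i j)) = sum_to m (fun j => sum_to n (fun i => f i j)).
Proof.
  induction n; simpl. rewrite sum_to_zero; auto.
  rewrite IHn. rewrite <- sum_to_plus. auto.
Qed.

Lemma sum_to_delta n j (a : nat -> R) : (j < n)%nat ->
  sum_to n (fun i => if Nat.eqb i j then a i else 0) = a j.
Proof.
  induction n; intros H; [lia|]. simpl. destruct (Nat.eqb_spec n j).
  - subst. rewrite (sum_to_ext _ _ (fun _ => 0)). rewrite sum_to_zero; ring.
    intros i Hi. destruct (Nat.eqb_spec i j); [lia|auto].
  - rewrite IHn by lia. ring.
Qed.

Lemma sum_to_delta' n j (a : nat -> R) : (j < n)%nat ->
  sum_to n (fun i => if Nat.eqb j i then a i else 0) = a j.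
Proof.
  intros H. rewrite <- (sum_to_delta n j a H). apply sum_to_ext. intros i _.
  rewrite Nat.eqb_sym. auto.
Qed.

Lemma sum_to_nonneg n f : (forall i, (i < n)%nat -> 0 <= f i) -> 0 <= sum_to n f.
Proof. induction n; simpl; intros H; [lra|]. pose proof (H n ltac:(lia)). pose proof (IHn ltac:(intros; apply H; lia)). lra. Qed.

Lemma sum_to_le n f g : (forall i, (i < n)%nat -> f i <= g i) -> sum_to n f <= sum_to n g.
Proof. induction n; simpl; intros H; [lra|]. pose proof (H n ltac:(lia)). pose proof (IHn ltac:(intros; apply H; lia)). lra. Qed.

Definition vl (v : list R) : vec := fun i => nth i v 0.
Definition consv (x : R) (w : vec) : vec := fun i => match i with O => x | S k => w k end.
Definition bil (n : nat) (A : mat) (x y : vec) : R := sum_to n (fun i => x i * mvec n A y i).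
Definition subm (A : mat) : mat := fun i j => A (S i) (S j).

Lemma vl_cons x w i : vl (x :: w) i = consv x (vl w) i.
Proof. destruct i; reflexivity. Qed.

Lemma mvec_ext n A x y : (forall i, (i < n)%nat -> x i = y i) -> forall j, mvec n A x j = mvec n A y j.
Proof. intros H j. unfold mvec. apply sum_to_ext. intros; rewrite H; auto. Qed.

Lemma bil_ext n A x y x' y' : (forall i, (i < n)%nat -> x i = x' i) -> (forall i, (i < n)%nat -> y i = y' i) ->
  bil n A x y = bil n A x' y'.
Proof. intros H1 H2. unfold bil. apply sum_to_ext. intros i Hi. rewrite H1 by auto. rewrite (mvec_ext n A y y' H2). auto. Qed.

Lemma quad_bil n A x : quad n A x = bil n A x x.
Proof. reflexivity. Qed.

Lemma quad_ext n A x y : (forall i, (i < n)%nat -> x i = y i) -> quad n A x = quad n A y.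
Proof. intros H. rewrite !quad_bil. apply bil_ext; auto. Qed.

Lemma bil_lin_l n A a x y z : bil n A (fun i => a * x i + y i) z = a * bil n A x z + bil n A y z.
Proof. unfold bil. rewrite <- sum_to_scal, <- sum_to_plus. apply sum_to_ext. intros; ring. Qed.

Lemma mvec_lin n A a x y j : mvec n A (fun i => a * x i + y i) j = a * mvec n A x j + mvec n A y j.
Proof. unfold mvec. rewrite <- sum_to_scal, <- sum_to_plus. apply sum_to_ext. intros; ring. Qed.

Lemma bil_lin_r n A a x y z : bil n A z (fun i => a * x i + y i) = a * bil n A z x + bil n A z y.
Proof. unfold bil. rewrite <- sum_to_scal, <- sum_to_plus. apply sum_to_ext. intros. rewrite mvec_lin. ring. Qed.

Lemma bil_swap n A x y : bil n A x y = sum_to n (fun k => sum_to n (fun i => x i * A i k) * y k).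
Proof.
  unfold bil, mvec. rewrite (sum_to_ext _ _ (fun i => sum_to n (fun k => x i * A i k * y k))).
  2:{ intros. rewrite <- sum_to_scal. apply sum_to_ext; intros; ring. }
  rewrite sum_to_swap. apply sum_to_ext. intros. rewrite <- sum_to_scal_r. auto.
Qed.

Lemma bil_sym n A x y : symmetric n A -> bil n A x y = bil n A y x.
Proof.
  intros HS. rewrite bil_swap. unfold bil, mvec. apply sum_to_ext. intros k Hk.
  rewrite Rmult_comm. f_equal. apply sum_to_ext. intros. rewrite HS by auto. ring.
Qed.

Lemma bil_c0_l n A w y : bil (S n) A (consv 0 w) y = sum_to n (fun k => w k * mvec (S n) A y (S k)).
Proof. unfold bil. rewrite sum_to_S_l. simpl consv. ring. Qed.

Lemma bil_c0_r n A w y : bil (S n) A y (consv 0 w) = sum_to n (fun k => sum_to (S n) (fun i => y i * A i (S k)) * w k).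
Proof.
  rewrite bil_swap. rewrite sum_to_S_l. simpl consv. rewrite Rmult_0_r, Rplus_0_l. auto.
Qed.

Lemma mvec_c0 n A w i : mvec (S n) A (consv 0 w) i = mvec n (fun a b => A a (S b)) w i.
Proof. unfold mvec. rewrite sum_to_S_l. simpl consv. ring. Qed.

Lemma bil_c0_c0 n A w : bil (S n) A (consv 0 w) (consv 0 w) = quad n (subm A) w.
Proof.
  rewrite bil_c0_l. unfold quad. apply sum_to_ext. intros k _. rewrite mvec_c0. reflexivity.
Qed.

Lemma quad_dec n A x y w :
  quad (S n) A (fun i => x * y i + consv 0 w i) =
  x * x * quad (S n) A y +
  x * sum_to n (fun k => (sum_to (S n) (fun i => y i * A i (S k)) + mvec (S n) A y (S k)) * w k) +
  quad n (subm A) w.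
Proof.
  rewrite quad_bil. rewrite bil_lin_l. rewrite !bil_lin_r.
  rewrite bil_c0_c0, bil_c0_r, bil_c0_l. rewrite <- quad_bil.
  rewrite (sum_to_ext n (fun k => (sum_to (S n) (fun i => y i * A i (S k)) + mvec (S n) A y (S k)) * w k)
     (fun k => sum_to (S n) (fun i => y i * A i (S k)) * w k + w k * mvec (S n) A y (S k))) by (intros; ring).
  rewrite sum_to_plus. ring.
Qed.

Lemma lin_dec n (b : vec) x y w :
  sum_to (S n) (fun i => b i * (x * y i + consv 0 w i)) =
  x * sum_to (S n) (fun i => b i * y i) + sum_to n (fun k => b (S k) * w k).
Proof.
  rewrite (sum_to_ext _ _ (fun i => x * (b i * y i) + b i * consv 0 w i)) by (intros; ring).
  rewrite sum_to_plus, sum_to_scal. rewrite (sum_to_S_l n (fun i => b i * consv 0 w i)). simpl consv. ring.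
Qed.
From Coquelicot Require Import Coquelicot.
Require Import Defs.
From Stdlib Require Import Reals Lra List Classical.
From Coquelicot Require Import Coquelicot.
Open Scope R_scope.
Require Import Defs.
From Stdlib Require Import Reals Lra List Classical.
From Coquelicot Require Import Coquelicot.
Open Scope R_scope.

Definition lim_pinf (F : R -> R) (l : R) : Prop :=
  forall eps, 0 < eps -> exists A, forall b, A <= b -> Rabs (F b - l) < eps.
Definition lim_minf (F : R -> R) (l : R) : Prop :=
  forall eps, 0 < eps -> exists A, forall b, b <= A -> Rabs (F b - l) < eps.

Lemma int_R_antider (f F : R -> R) lp lm :
  (forall x, is_derive F x (f x)) -> (forall x, continuous f x) ->
  lim_pinf F lp -> lim_minf F lm -> int_R f (lp - lm).
Proof.
  intros HD HC Hp Hm eps Heps.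
  destruct (Hp (eps/2)) as [A1 HA1]; [lra|].
  destruct (Hm (eps/2)) as [A2 HA2]; [lra|].
  exists (Rabs A1 + Rabs A2 + 1). split. { pose proof (Rabs_pos A1); pose proof (Rabs_pos A2); lra. }
  intros a b Ha Hb.
  assert (Hex : ex_RInt f a b) by (apply (@ex_RInt_continuous R_CompleteNormedModule); intros; apply HC).
  exists (ex_RInt_Reals_0 _ _ _ Hex).
  rewrite <- RInt_Reals.
  assert (E : RInt f a b = F b - F a).
  { apply is_RInt_unique. apply (@is_RInt_derive R_CompleteNormedModule F f); intros; [apply HD | apply HC]. }
  rewrite E.
  assert (Hb' : A1 <= b) by (pose proof (Rle_abs A1); pose proof (Rabs_pos A2); lra).
  assert (Ha' : a <= A2) by (pose proof (Rle_abs (-A2)); rewrite Rabs_Ropp in *; pose proof (Rabs_pos A1); lra).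
  specialize (HA1 b Hb'). specialize (HA2 a Ha').
  apply Rabs_def2 in HA1. apply Rabs_def2 in HA2. apply Rabs_def1; lra.
Qed.

Lemma int_R_ext (f g : R -> R) l : (forall x, f x = g x) -> int_R f l -> int_R g l.
Proof.
  intros E H eps Heps. destruct (H eps Heps) as [A [HA H1]]. exists A. split; auto.
  intros a b Ha Hb. destruct (H1 a b Ha Hb) as [pr Hpr].
  assert (Hex : ex_RInt g a b).
  { apply (ex_RInt_ext f). intros; auto. apply ex_RInt_Reals_1; exact pr. }
  exists (ex_RInt_Reals_0 _ _ _ Hex). rewrite <- RInt_Reals. rewrite <- (RInt_Reals f a b pr) in Hpr.
  rewrite (RInt_ext g f); auto.
Qed.

Lemma scal1R (x : R) : scal 1 x = x.
Proof. exact (scal_one x). Qed.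

Lemma int_R_shift (g : R -> R) l c : int_R g l -> int_R (fun x => g (x + c)) l.
Proof.
  intros H eps Heps. destruct (H eps Heps) as [A [HA H1]].
  exists (A + Rabs c). split. { pose proof (Rabs_pos c); lra. }
  intros a b Ha Hb.
  assert (Ha' : a + c <= - A) by (pose proof (Rle_abs c); pose proof (Rle_abs (-c)); rewrite Rabs_Ropp in *; lra).
  assert (Hb' : A <= b + c) by (pose proof (Rle_abs c); pose proof (Rle_abs (-c)); rewrite Rabs_Ropp in *; lra).
  destruct (H1 _ _ Ha' Hb') as [pr Hpr].
  assert (Hex0 : ex_RInt g (1 * a + c) (1 * b + c)).
  { replace (1*a+c) with (a+c) by ring. replace (1*b+c) with (b+c) by ring. apply ex_RInt_Reals_1; exact pr. }
  assert (Hex : ex_RInt (fun x => g (x + c)) a b).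
  { apply (ex_RInt_ext (fun y => scal 1 (g (1 * y + c)))).
    - intros. rewrite scal1R. f_equal. ring.
    - exact (@ex_RInt_comp_lin R_NormedModule g 1 c a b Hex0). }
  exists (ex_RInt_Reals_0 _ _ _ Hex). rewrite <- RInt_Reals. rewrite <- (RInt_Reals g _ _ pr) in Hpr.
  assert (E : RInt (fun x => g (x + c)) a b = RInt g (1*a+c) (1*b+c)).
  { rewrite <- (@RInt_comp_lin R_CompleteNormedModule g 1 c a b Hex0). apply RInt_ext. intros. rewrite scal1R. f_equal. ring. }
  rewrite E. replace (1*a+c) with (a+c) by ring. replace (1*b+c) with (b+c) by ring. exact Hpr.
Qed.

Lemma exd_cont (f : R -> R) x : ex_derive f x -> continuous f x.
Proof. intros H. exact (@ex_derive_continuous R_AbsRing R_NormedModule f x H). Qed.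

Definition gs (a x : R) := exp (- (a * x ^ 2)).

Lemma gs_cont a x : continuous (gs a) x.
Proof. apply exd_cont. unfold gs. auto_derive. auto. Qed.

Lemma gs_pos a x : 0 < gs a x.
Proof. apply exp_pos. Qed.

Lemma gs_even a x : gs a (- x) = gs a x.
Proof. unfold gs. f_equal. ring. Qed.

Lemma exRI_gs a u v : ex_RInt (gs a) u v.
Proof. apply (@ex_RInt_continuous R_CompleteNormedModule). intros; apply gs_cont. Qed.

Definition Phi a t := RInt (gs a) 0 t.

Lemma Phi_deriv a x : is_derive (Phi a) x (gs a x).
Proof.
  apply (@is_derive_RInt R_NormedModule (gs a) (Phi a) 0 x).
  - apply filter_forall. intros y. unfold Phi. apply (@RInt_correct R_CompleteNormedModule). apply exRI_gs.
  - apply gs_cont.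
Qed.

Lemma Phi_mono a t t' : t <= t' -> Phi a t <= Phi a t'.
Proof.
  intros H. unfold Phi.
  rewrite <- (@RInt_Chasles R_CompleteNormedModule (gs a) 0 t t') by apply exRI_gs.
  assert (0 <= RInt (gs a) t t').
  { apply RInt_ge_0; auto. apply exRI_gs. intros; left; apply gs_pos. }
  change (plus (RInt (gs a) 0 t) (RInt (gs a) t t')) with (RInt (gs a) 0 t + RInt (gs a) t t'). lra.
Qed.

Lemma Phi_odd a t : Phi a (- t) = - Phi a t.
Proof.
  unfold Phi.
  assert (E := @RInt_comp_lin R_CompleteNormedModule (gs a) (-1) 0 0 t).
  replace (-1 * 0 + 0) with 0 in E by ring. replace (-1 * t + 0) with (-t) in E by ring.
  rewrite <- E by apply exRI_gs.
  rewrite (@RInt_scal R_CompleteNormedModule (fun y => gs a (-1 * y + 0)) 0 t (-1)).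
  - change (scal (-1) ?x) with (-1 * x). rewrite (RInt_ext _ (gs a)). assert (X : forall r:R, -1*r = -r) by (intros; ring). apply X.
    intros. replace (-1 * x + 0) with (-x) by ring. apply gs_even.
  - apply (ex_RInt_ext (gs a)). intros. replace (-1 * x + 0) with (-x) by ring. symmetry; apply gs_even. apply exRI_gs.
Qed.

Lemma Phi_bound a : 0 < a -> forall t, Phi a t <= exp a / (2 * a).
Proof.
  intros Ha t. destruct (Rle_lt_dec 0 t) as [Ht|Ht].
  - set (G := fun x => - exp (a - 2 * a * x) / (2 * a)).
    assert (HG : forall x, is_derive G x (exp (a - 2 * a * x))).
    { intros x. unfold G. auto_derive. auto. unfold Rminus. field. lra. }
    assert (HI : RInt (fun x => exp (a - 2 * a * x)) 0 t = G t - G 0).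
    { apply is_RInt_unique. apply (@is_RInt_derive R_CompleteNormedModule G). intros; apply HG.
      intros. apply exd_cont. auto_derive. auto. }
    unfold Phi. eapply Rle_trans. apply (RInt_le _ (fun x => exp (a - 2 * a * x))); auto.
    apply exRI_gs. apply (@ex_RInt_continuous R_CompleteNormedModule). intros; apply exd_cont; auto_derive; auto.
    intros x _. unfold gs. destruct (Req_dec (- (a * x ^ 2)) (a - 2*a*x)) as [E|E]. rewrite E; lra.
    left. apply exp_increasing. assert (0 <= a * (x - 1)^2) by (apply Rmult_le_pos; [lra| apply pow2_ge_0]). nra.
    rewrite HI. unfold G. replace (a - 2 * a * 0) with a by ring.
    assert (0 < exp (a - 2*a*t)) by apply exp_pos.
    assert (exp (a - 2 * a * t) / (2*a) > 0) by (apply Rdiv_lt_0_compat; lra).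
    unfold Rdiv in *. lra.
  - assert (Phi a t <= Phi a 0) by (apply Phi_mono; lra).
    unfold Phi at 2 in H. rewrite RInt_point in H. change (zero : R) with 0 in H.
    assert (exp a / (2*a) > 0) by (apply Rdiv_lt_0_compat; [apply exp_pos|lra]). lra.
Qed.

Lemma lim_pinf_plus f g l1 l2 : lim_pinf f l1 -> lim_pinf g l2 -> lim_pinf (fun x => f x + g x) (l1 + l2).
Proof.
  intros H1 H2 eps He. destruct (H1 (eps/2)) as [A1 HA1]; [lra|]. destruct (H2 (eps/2)) as [A2 HA2]; [lra|].
  exists (Rmax A1 A2). intros b Hb. specialize (HA1 b (Rle_trans _ _ _ (Rmax_l _ _) Hb)).
  specialize (HA2 b (Rle_trans _ _ _ (Rmax_r _ _) Hb)).
  apply Rabs_def2 in HA1; apply Rabs_def2 in HA2; apply Rabs_def1; lra.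
Qed.
Lemma lim_minf_plus f g l1 l2 : lim_minf f l1 -> lim_minf g l2 -> lim_minf (fun x => f x + g x) (l1 + l2).
Proof.
  intros H1 H2 eps He. destruct (H1 (eps/2)) as [A1 HA1]; [lra|]. destruct (H2 (eps/2)) as [A2 HA2]; [lra|].
  exists (Rmin A1 A2). intros b Hb. specialize (HA1 b (Rle_trans _ _ _ Hb (Rmin_l _ _))).
  specialize (HA2 b (Rle_trans _ _ _ Hb (Rmin_r _ _))).
  apply Rabs_def2 in HA1; apply Rabs_def2 in HA2; apply Rabs_def1; lra.
Qed.
Lemma lim_pinf_scal f l c : lim_pinf f l -> lim_pinf (fun x => c * f x) (c * l).
Proof.
  intros H eps He. destruct (H (eps / (Rabs c + 1))) as [A HA].
  { apply Rdiv_lt_0_compat; auto. pose proof (Rabs_pos c); lra. }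
  exists A. intros b Hb. specialize (HA b Hb).
  replace (c * f b - c * l) with (c * (f b - l)) by ring. rewrite Rabs_mult.
  pose proof (Rabs_pos c). pose proof (Rabs_pos (f b - l)).
  apply Rle_lt_trans with ((Rabs c + 1) * Rabs (f b - l)). nra.
  replace eps with ((Rabs c + 1) * (eps / (Rabs c + 1))) by (field; lra).
  apply Rmult_lt_compat_l; lra.
Qed.
Lemma lim_minf_scal f l c : lim_minf f l -> lim_minf (fun x => c * f x) (c * l).
Proof.
  intros H eps He. destruct (H (eps / (Rabs c + 1))) as [A HA].
  { apply Rdiv_lt_0_compat; auto. pose proof (Rabs_pos c); lra. }
  exists A. intros b Hb. specialize (HA b Hb).
  replace (c * f b - c * l) with (c * (f b - l)) by ring. rewrite Rabs_mult.
  pose proof (Rabs_pos c). pose proof (Rabs_pos (f b - l)).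
  apply Rle_lt_trans with ((Rabs c + 1) * Rabs (f b - l)). nra.
  replace eps with ((Rabs c + 1) * (eps / (Rabs c + 1))) by (field; lra).
  apply Rmult_lt_compat_l; lra.
Qed.

Lemma lim_pinf_ext f g l l' : lim_pinf f l -> (forall x, f x = g x) -> l = l' -> lim_pinf g l'.
Proof. intros H E <- e He. destruct (H e He) as [A HA]. exists A. intros b Hb. rewrite <- E. auto. Qed.
Lemma lim_minf_ext f g l l' : lim_minf f l -> (forall x, f x = g x) -> l = l' -> lim_minf g l'.
Proof. intros H E <- e He. destruct (H e He) as [A HA]. exists A. intros b Hb. rewrite <- E. auto. Qed.

Lemma small_lim a (P : R -> R) : 0 < a ->
  (forall x, 1 <= Rabs x -> Rabs (P x) <= / (a * Rabs x)) -> lim_pinf P 0 /\ lim_minf P 0.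
Proof.
  intros Ha H.
  assert (K : forall eps, 0 < eps -> forall x, 1 + / (a * eps) <= Rabs x -> Rabs (P x - 0) < eps).
  { intros eps He x Hx. rewrite Rminus_0_r.
    assert (0 < / (a*eps)) by (apply Rinv_0_lt_compat; nra).
    eapply Rle_lt_trans. apply H. lra.
    assert (Hx' : / (a * eps) < Rabs x) by lra.
    assert (Hx0 : 0 < Rabs x) by lra.
    apply (Rmult_lt_reg_l (a * Rabs x)). apply Rmult_lt_0_compat; auto.
    rewrite Rinv_r by (apply Rgt_not_eq; apply Rmult_lt_0_compat; auto).
    apply (Rmult_lt_compat_l (a * eps)) in Hx'. 2: nra.
    rewrite Rinv_r in Hx' by (apply Rgt_not_eq; nra). nra. }
  split.
  - intros eps He. exists (1 + / (a*eps)). intros b Hb. apply K; auto.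
    eapply Rle_trans; [exact Hb|apply Rle_abs].
  - intros eps He. exists (- (1 + / (a*eps))). intros b Hb. apply K; auto.
    rewrite <- Rabs_Ropp. eapply Rle_trans; [|apply Rle_abs]. lra.
Qed.

Lemma xgs_bound a x : 0 < a -> 1 <= Rabs x -> Rabs x * gs a x <= / (a * Rabs x).
Proof.
  intros Ha Hx. unfold gs. rewrite exp_Ropp.
  pose proof (exp_ineq1_le (a * x^2)).
  assert (Hx2 : x^2 = Rabs x * Rabs x) by (rewrite <- Rabs_mult; simpl; rewrite Rmult_1_r; rewrite Rabs_right; [ring|]; nra).
  rewrite Hx2 in *.
  assert (0 < a * (Rabs x * Rabs x)) by (apply Rmult_lt_0_compat; nra).
  apply Rle_trans with (Rabs x / (a * (Rabs x * Rabs x))).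
  - unfold Rdiv. apply Rmult_le_compat_l. lra. apply Rinv_le_contravar. auto. lra.
  - right. field. lra.
Qed.

Lemma gs_lim a : 0 < a -> lim_pinf (gs a) 0 /\ lim_minf (gs a) 0.
Proof.
  intros Ha. apply (small_lim a); auto. intros x Hx.
  rewrite Rabs_right by (left; apply gs_pos).
  eapply Rle_trans; [|apply xgs_bound; auto]. pose proof (gs_pos a x). nra.
Qed.

Lemma xgs_lim a : 0 < a -> lim_pinf (fun x => x * gs a x) 0 /\ lim_minf (fun x => x * gs a x) 0.
Proof.
  intros Ha. apply (small_lim a); auto. intros x Hx.
  rewrite Rabs_mult. rewrite (Rabs_right (gs a x)) by (left; apply gs_pos). apply xgs_bound; auto.
Qed.

Lemma Phi_lim a : 0 < a -> exists lp, 0 < lp /\ lim_pinf (Phi a) lp /\ lim_minf (Phi a) (- lp).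
Proof.
  intros Ha.
  set (E := fun y => exists t, 0 <= t /\ y = Phi a t).
  destruct (completeness E) as [lp [Hub Hl]].
  { exists (exp a / (2*a)). intros y [t [_ ->]]. apply Phi_bound; auto. }
  { exists (Phi a 0). exists 0. split; [lra|auto]. }
  assert (P1 : Phi a 1 <= lp) by (apply Hub; exists 1; split; [lra|auto]).
  assert (P1' : 0 < Phi a 1).
  { unfold Phi. apply RInt_gt_0. lra. intros; apply gs_pos. intros; apply gs_cont. }
  assert (Lp : lim_pinf (Phi a) lp).
  { intros eps He.
    destruct (classic (exists t, 0 <= t /\ lp - eps < Phi a t)) as [[t0 [Ht0 Ht1]]|Hn].
    - exists t0. intros b Hb. assert (Phi a t0 <= Phi a b) by (apply Phi_mono; auto).
      assert (Phi a b <= lp) by (apply Hub; exists b; split; [lra|auto]).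
      apply Rabs_def1; lra.
    - exfalso. assert (lp <= lp - eps); [|lra]. apply Hl. intros y [t [Ht ->]].
      apply Rnot_lt_le. intros C. apply Hn. exists t; auto. }
  exists lp. split. lra. split. auto.
  intros eps He. destruct (Lp eps He) as [A HA]. exists (- A). intros b Hb.
  replace b with (- (-b)) by ring. rewrite Phi_odd.
  replace (- Phi a (- b) - - lp) with (- (Phi a (-b) - lp)) by ring. rewrite Rabs_Ropp. apply HA. lra.
Qed.

Lemma gauss1 a : 0 < a -> exists Z1, 0 < Z1 /\ forall K p q r,
  int_R (fun x => K * (gs a x * (p * x ^ 2 + q * x + r))) (K * Z1 * (p / (2 * a) + r)).
Proof.
  intros Ha. destruct (Phi_lim a Ha) as [lp [Hlp [Lp Lm]]].
  exists (2 * lp). split. lra. intros K p q r.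
  destruct (gs_lim a Ha) as [G1 G2]. destruct (xgs_lim a Ha) as [X1 X2].
  set (F := fun x => K * (p * (- (x * gs a x) / (2 * a) + Phi a x / (2 * a)) + q * (- gs a x / (2 * a)) + r * Phi a x)).
  replace (K * (2 * lp) * (p / (2 * a) + r)) with
    (K * (p * (- 0 / (2*a) + lp / (2*a)) + q * (- 0 / (2*a)) + r * lp) - K * (p * (- 0 / (2*a) + - lp / (2*a)) + q * (- 0 / (2*a)) + r * - lp)) by (field; lra).
  apply (int_R_antider _ F).
  - intros x. unfold F. unfold gs. auto_derive.
    + repeat split; exists (gs a x); apply Phi_deriv.
    + replace (Derive (fun x0 => Phi a x0) x) with (gs a x) by (symmetry; apply is_derive_unique; apply Phi_deriv). cbv beta. replace (x*(x*1)) with (x^2) by ring. unfold gs. field. lra.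
  - intros x. apply exd_cont. unfold gs. auto_derive. auto.
  - eapply (lim_pinf_ext (fun x => (- (K*p)/(2*a)) * (x * gs a x) + (- (K*q)/(2*a)) * gs a x + (K*(p/(2*a) + r)) * Phi a x)).
    + apply lim_pinf_plus; [apply lim_pinf_plus; apply lim_pinf_scal; [exact X1|exact G1]|apply lim_pinf_scal; exact Lp].
    + intros x. unfold F. field. lra.
    + field. lra.
  - eapply (lim_minf_ext (fun x => (- (K*p)/(2*a)) * (x * gs a x) + (- (K*q)/(2*a)) * gs a x + (K*(p/(2*a) + r)) * Phi a x)).
    + apply lim_minf_plus; [apply lim_minf_plus; apply lim_minf_scal; [exact X2|exact G2]|apply lim_minf_scal; exact Lm].
    + intros x. unfold F. field. lra.
    + field. lra.
Qed.

Lemma iter_int_ext n : forall f f' l, (forall v, length v = n -> f v = f' v) -> iter_int n f l -> iter_int n f' l.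
Proof.
  induction n; simpl; intros f f' l E H.
  - rewrite H. apply E; auto.
  - destruct H as [g [Hg Hi]]. exists g. split; auto. intros x.
    apply (IHn (fun v => f (x :: v))); auto. intros v Hv. apply E. simpl; auto.
Qed.

Fixpoint tr_list (a : nat -> R) (v : list R) : list R :=
  match v with nil => nil | x :: w => (x + a O) :: tr_list (fun i => a (S i)) w end.

Lemma tr_list_length a v : length (tr_list a v) = length v.
Proof. revert a; induction v; simpl; intros; auto. Qed.

Lemma tr_list_nth a v i : (i < length v)%nat -> vl (tr_list a v) i = vl v i + a i.
Proof.
  revert a i; induction v; simpl; intros b i Hi; [lia|].
  destruct i; unfold vl; simpl; auto. apply (IHv (fun i => b (S i))). lia.
Qed.

Lemma iter_int_shift n : forall f l a, iter_int n f l -> iter_int n (fun v => f (tr_list a v)) l.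
Proof.
  induction n; simpl; intros f l a H; auto.
  destruct H as [g [Hg Hi]]. exists (fun x => g (x + a O)). split.
  - intros x. apply (IHn (fun v => f ((x + a O) :: v))). apply Hg.
  - apply int_R_shift. auto.
Qed.

Definition polyv (n : nat) (A : mat) (b : vec) (g : R) (x : vec) : R :=
  quad n A x + sum_to n (fun i => b i * x i) + g.
Definition frob (n : nat) (A Sg : mat) : R := sum_to n (fun i => sum_to n (fun j => A i j * Sg i j)).
Definition gclass (n : nat) (S A : mat) (b : vec) (g : R) : list R -> R :=
  fun v => polyv n A b g (vl v) * exp (- quad n S (vl v)).

Lemma polyv_scal n A b g c x :
  polyv n (fun i j => c * A i j) (fun i => c * b i) (c * g) x = c * polyv n A b g x.
Proof.
  unfold polyv, quad, mvec.
  rewrite (sum_to_ext n (fun i => x i * sum_to n (fun k => c * A i k * x k)) (fun i => c * (x i * sum_to n (fun k => A i k * x k)))).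
  2:{ intros. rewrite <- sum_to_scal. rewrite <- (sum_to_scal n (x i)). rewrite <- sum_to_scal. apply sum_to_ext; intros; ring. }
  rewrite sum_to_scal.
  rewrite (sum_to_ext n (fun i => c * b i * x i) (fun i => c * (b i * x i))) by (intros; ring).
  rewrite sum_to_scal. ring.
Qed.

Lemma frob_scal n A Sg c : frob n (fun i j => c * A i j) Sg = c * frob n A Sg.
Proof.
  unfold frob. rewrite <- sum_to_scal. apply sum_to_ext. intros. rewrite <- sum_to_scal. apply sum_to_ext. intros; ring.
Qed.

Definition Claim (n : nat) : Prop := forall S, symmetric n S -> pos_def n S ->
  exists Z Sg, 0 < Z /\ symmetric n Sg /\
   (forall i j, (i < n)%nat -> (j < n)%nat -> sum_to n (fun k => S i k * Sg k j) = if Nat.eqb i j then / 2 else 0) /\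
   forall A b g, iter_int n (gclass n S A b g) (Z * (g + frob n A Sg)).

Lemma claim0 : Claim O.
Proof.
  intros S _ _. exists 1, (fun _ _ => 0). split. lra. split. intros i j Hi; lia. split. intros i j Hi; lia.
  intros A b g. simpl. unfold gclass, polyv, quad, frob. simpl. rewrite Ropp_0, exp_0. ring.
Qed.

Lemma consv_split x w0 (y0 u : vec) : y0 O = 1 -> (forall i, y0 (S i) = - u i) ->
  forall i, consv x w0 i = x * y0 i + consv 0 (fun k => w0 k + x * u k) i.
Proof. intros H0 H1 i. destruct i; simpl. rewrite H0; ring. rewrite H1; ring. Qed.

Lemma claimS m : Claim m -> Claim (S m).
Proof.
  intros IH W HS HP.
  set (S' := subm W).
  assert (HS' : symmetric m S') by (intros i j Hi Hj; unfold S', subm; apply HS; lia).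
  assert (HP' : pos_def m S').
  { intros x [i [Hi Hx]]. unfold S'. rewrite <- bil_c0_c0. rewrite <- quad_bil. apply HP.
    exists (S i). split. lia. simpl. auto. }
  destruct (IH S' HS' HP') as [Z' [Sg' [HZ' [HSg' [HSS' HI]]]]].
  set (s0 := fun j => W O (S j)).
  set (u := fun i => 2 * sum_to m (fun k => Sg' i k * s0 k)).
  set (y0 := consv 1 (fun i => - u i)).
  set (al := quad (S m) W y0).
  assert (F2 : forall i, (i < m)%nat -> mvec m S' u i = s0 i).
  { intros i Hi. unfold mvec, u.
    rewrite (sum_to_ext _ _ (fun k => sum_to m (fun l => 2 * (S' i k * Sg' k l) * s0 l))).
    2:{ intros k Hk. rewrite <- sum_to_scal. rewrite <- sum_to_scal. apply sum_to_ext. intros; ring. }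
    rewrite sum_to_swap.
    rewrite (sum_to_ext _ _ (fun l => 2 * sum_to m (fun k => S' i k * Sg' k l) * s0 l)).
    2:{ intros l Hl. rewrite (sum_to_ext _ _ (fun k => (2 * s0 l) * (S' i k * Sg' k l))) by (intros; ring). rewrite sum_to_scal. ring. }
    rewrite (sum_to_ext _ _ (fun l => if Nat.eqb i l then s0 l else 0)).
    2:{ intros l Hl. rewrite HSS' by auto. destruct (Nat.eqb i l); field. }
    apply sum_to_delta'. auto. }
  assert (F3 : forall i, (i < m)%nat -> mvec (S m) W y0 (S i) = 0).
  { intros i Hi. unfold mvec. rewrite sum_to_S_l. unfold y0 at 1. simpl consv.
    rewrite (sum_to_ext _ _ (fun k => - (S' i k * u k))) by (intros; unfold S', subm, y0; simpl; ring).
    rewrite (sum_to_ext _ _ (fun k => -1 * (S' i k * u k))) by (intros; ring).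
    rewrite sum_to_scal. change (sum_to m (fun k => S' i k * u k)) with (mvec m S' u i). rewrite F2 by auto.
    unfold s0. rewrite HS by lia. ring. }
  assert (F3' : mvec (S m) W y0 O = al).
  { unfold al. unfold quad. rewrite sum_to_S_l. replace (y0 O) with 1 by reflexivity.
    rewrite (sum_to_ext _ _ (fun _ => 0)). rewrite sum_to_zero. ring.
    intros i Hi. rewrite F3 by auto. ring. }
  assert (Hal : 0 < al).
  { apply HP. exists O. split. lia. unfold y0. simpl. lra. }
  assert (Hcoef : forall k, (k < m)%nat -> sum_to (S m) (fun i => y0 i * W i (S k)) + mvec (S m) W y0 (S k) = 0).
  { intros k Hk. rewrite F3 by auto. unfold mvec. rewrite Rplus_0_r. rewrite <- (F3 k Hk). unfold mvec.
    apply sum_to_ext. intros i Hi. rewrite (HS i (S k)) by lia. ring. }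
  assert (Hq : forall x w0, quad (S m) W (consv x w0) = x * x * al + quad m S' (fun i => w0 i + x * u i)).
  { intros x w0. rewrite (quad_ext (S m) W _ (fun i => x * y0 i + consv 0 (fun k => w0 k + x * u k) i)).
    2:{ intros i _. apply consv_split; reflexivity. }
    rewrite quad_dec. rewrite (sum_to_ext _ _ (fun _ => 0)). rewrite sum_to_zero. fold al. unfold S'. ring.
    intros k Hk. rewrite Hcoef by auto. ring. }
  assert (Hy0 : y0 O = 1) by reflexivity.
  assert (Hy1 : forall i, y0 (S i) = - u i) by reflexivity.
  assert (Hu : forall j, u j = 2 * sum_to m (fun k => Sg' j k * s0 k)) by reflexivity.
  assert (Hs0 : forall j, s0 j = W O (S j)) by reflexivity.
  assert (HS'd : forall i j, S' i j = W (S i) (S j)) by reflexivity.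
  clearbody y0 u s0 al S'.
  destruct (gauss1 al Hal) as [Z1 [HZ1 HG]].
  set (Sg := fun i j => y0 i * y0 j / (2 * al) +
        match i, j with S i', S j' => Sg' i' j' | _, _ => 0 end).
  exists (Z' * Z1), Sg. split. apply Rmult_lt_0_compat; auto. split.
  { intros i j Hi Hj. unfold Sg. clearbody Sg. destruct i, j; [field; lra|field; lra|field; lra|]. rewrite HSg' by lia. field; lra. }
  split.
  { intros i j Hi Hj. unfold Sg.
    rewrite (sum_to_ext _ _ (fun k => y0 j / (2 * al) * (W i k * y0 k) + W i k * match k, j with S i', S j' => Sg' i' j' | _, _ => 0 end)) by (intros; field; lra).
    rewrite sum_to_plus, sum_to_scal. change (sum_to (S m) (fun k => W i k * y0 k)) with (mvec (S m) W y0 i).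
    rewrite sum_to_S_l. rewrite Rmult_0_r, Rplus_0_l.
    destruct i as [|i'].
    - rewrite F3'. destruct j as [|j'].
      + simpl. rewrite (sum_to_ext _ _ (fun _ => 0)) by (intros; ring). rewrite sum_to_zero. rewrite Hy0. field. lra.
      + simpl Nat.eqb. rewrite Hy1.
        rewrite (sum_to_ext _ _ (fun k => Sg' j' k * s0 k)).
        2:{ intros k Hk. rewrite HSg' by lia. rewrite Hs0. ring. }
        replace (sum_to m (fun k => Sg' j' k * s0 k)) with (u j' / 2) by (rewrite Hu; field).
        field. lra.
    - rewrite F3 by lia. destruct j as [|j'].
      + simpl. rewrite (sum_to_ext _ _ (fun _ => 0)) by (intros; ring). rewrite sum_to_zero. ring.
      + simpl Nat.eqb. rewrite <- (HSS' i' j') by lia. ring_simplify. apply sum_to_ext. intros; rewrite HS'd; ring. }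
  intros A b g.
  set (qA := quad (S m) A y0).
  set (qb := sum_to (S m) (fun i => b i * y0 i)).
  set (r := g + frob m (subm A) Sg').
  exists (fun x => Z' * (gs al x * (qA * x ^ 2 + qb * x + r))). split.
  - intros x.
    set (E := exp (- (x * x * al))).
    set (b2 := fun k => x * (sum_to (S m) (fun i => y0 i * A i (S k)) + mvec (S m) A y0 (S k)) + b (S k)).
    set (g2 := x * x * qA + x * qb + g).
    assert (HI2 := HI (fun i j => E * subm A i j) (fun i => E * b2 i) (E * g2)).
    apply (iter_int_shift _ _ _ (fun i => x * u i)) in HI2.
    assert (Hv : Z' * (E * g2 + frob m (fun i j => E * subm A i j) Sg') = Z' * (gs al x * (qA * x ^ 2 + qb * x + r))).
    { rewrite frob_scal. unfold gs, g2, r, E. replace (al * x^2) with (x*x*al) by ring. ring. }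
    rewrite <- Hv.
    eapply iter_int_ext; [|exact HI2].
    + intros v Hv'. unfold gclass. simpl. rewrite polyv_scal.
      rewrite (quad_ext m S' _ (fun i => vl v i + x * u i)) by (intros; rewrite tr_list_nth; auto; lia).
      assert (Hc : forall i, vl (x :: v) i = consv x (vl v) i) by apply vl_cons.
      rewrite (quad_ext _ _ _ _ (fun i _ => Hc i)). rewrite Hq.
      unfold polyv. rewrite (quad_ext _ _ _ _ (fun i _ => Hc i)).
      rewrite (sum_to_ext _ (fun i => b i * vl (x :: v) i) (fun i => b i * consv x (vl v) i)) by (intros; rewrite Hc; auto).
      rewrite (quad_ext (S m) A _ (fun i => x * y0 i + consv 0 (fun k => vl v k + x * u k) i)) by (intros i _; apply consv_split; [exact Hy0|exact Hy1]).
      rewrite (sum_to_ext _ (fun i => b i * consv x (vl v) i) (fun i => b i * (x * y0 i + consv 0 (fun k => vl v k + x * u k) i))) by (intros i _; rewrite <- consv_split; [reflexivity|exact Hy0|exact Hy1]).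
      rewrite quad_dec, lin_dec.
      rewrite (quad_ext m (subm A) (vl (tr_list (fun i => x * u i) v)) (fun k => vl v k + x * u k)) by (intros; rewrite tr_list_nth; auto; lia).
      rewrite (sum_to_ext m (fun i => b2 i * vl (tr_list (fun i0 : nat => x * u i0) v) i) (fun i => b2 i * (vl v i + x * u i))) by (intros; rewrite tr_list_nth; auto; lia).
      unfold b2, g2, E.
      rewrite Ropp_plus_distr, exp_plus.
      rewrite (sum_to_ext m (fun i => (x * (sum_to (S m) (fun i0 => y0 i0 * A i0 (S i)) + mvec (S m) A y0 (S i)) + b (S i)) * (vl v i + x * u i))
         (fun i => x * ((sum_to (S m) (fun i0 => y0 i0 * A i0 (S i)) + mvec (S m) A y0 (S i)) * (vl v i + x * u i)) + b (S i) * (vl v i + x * u i))) by (intros; ring).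
      rewrite sum_to_plus, sum_to_scal. fold qA qb. ring.
  - assert (Hf : frob (S m) A Sg = qA / (2 * al) + frob m (subm A) Sg').
    { unfold frob, Sg.
      rewrite (sum_to_ext _ _ (fun i => sum_to (S m) (fun j => y0 i * (A i j * y0 j) / (2 * al)) + sum_to (S m) (fun j => A i j * match i, j with S i', S j' => Sg' i' j' | _, _ => 0 end))).
      2:{ intros i Hi. rewrite <- sum_to_plus. apply sum_to_ext. intros; field; lra. }
      rewrite sum_to_plus.
      replace (sum_to (S m) (fun i => sum_to (S m) (fun j => y0 i * (A i j * y0 j) / (2 * al)))) with (qA / (2 * al)).
      2:{ unfold qA, quad, mvec. unfold Rdiv. rewrite <- sum_to_scal_r. apply sum_to_ext. intros i _.
          transitivity ((y0 i * / (2*al)) * sum_to (S m) (fun k => A i k * y0 k)). ring. rewrite <- sum_to_scal. apply sum_to_ext; intros; ring. }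
      rewrite sum_to_S_l. rewrite (sum_to_ext _ (fun j => A O j * _) (fun _ => 0)) by (intros; ring). rewrite sum_to_zero.
      rewrite (sum_to_ext m _ (fun i => sum_to m (fun j => subm A i j * Sg' i j))). ring.
      intros i Hi. rewrite sum_to_S_l. rewrite Rmult_0_r, Rplus_0_l. apply sum_to_ext. intros; reflexivity. }
    replace (Z' * Z1 * (g + frob (S m) A Sg)) with (Z' * Z1 * (qA / (2 * al) + r)). apply HG.
    rewrite Hf. unfold r. ring.
Qed.

Lemma claim_all n : Claim n.
Proof. induction n. apply claim0. apply claimS; auto. Qed.

Lemma mmul_assoc d A B C i j : mmul d (mmul d A B) C i j = mmul d A (mmul d B C) i j.
Proof.
  unfold mmul.
  rewrite (sum_to_ext _ _ (fun k => sum_to d (fun l => A i l * B l k * C k j))) by (intros; rewrite <- sum_to_scal_r; auto).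
  rewrite sum_to_swap. apply sum_to_ext. intros l _. rewrite <- sum_to_scal. apply sum_to_ext. intros; ring.
Qed.

Lemma meq_refl d A : meq d A A.
Proof. intros i j _ _; auto. Qed.
Lemma meq_sym d A B : meq d A B -> meq d B A.
Proof. intros H i j Hi Hj; symmetry; auto. Qed.
Lemma meq_trans d A B C : meq d A B -> meq d B C -> meq d A C.
Proof. intros H1 H2 i j Hi Hj. rewrite H1 by auto. auto. Qed.
Lemma meq_mmul d A A' B B' : meq d A A' -> meq d B B' -> meq d (mmul d A B) (mmul d A' B').
Proof. intros H1 H2 i j Hi Hj. unfold mmul. apply sum_to_ext. intros k Hk. rewrite H1, H2 by auto. auto. Qed.
Lemma meq_assoc d A B C : meq d (mmul d (mmul d A B) C) (mmul d A (mmul d B C)).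
Proof. intros i j _ _. apply mmul_assoc. Qed.
Lemma meq_id_l d A : meq d (mmul d idm A) A.
Proof.
  intros i j Hi Hj. unfold mmul, idm. rewrite (sum_to_ext _ _ (fun k => if Nat.eqb i k then A k j else 0)).
  apply (sum_to_delta' d i (fun k => A k j)); auto. intros k _. destruct (Nat.eqb i k); ring.
Qed.
Lemma meq_id_r d A : meq d (mmul d A idm) A.
Proof.
  intros i j Hi Hj. unfold mmul, idm. rewrite (sum_to_ext _ _ (fun k => if Nat.eqb k j then A i k else 0)).
  apply (sum_to_delta d j (fun k => A i k)); auto. intros k _. destruct (Nat.eqb k j); ring.
Qed.
Lemma meq_tr d A B : meq d A B -> meq d (tr A) (tr B).
Proof. intros H i j Hi Hj. unfold tr. auto. Qed.
Lemma meq_tr_mmul d A B : meq d (tr (mmul d A B)) (mmul d (tr B) (tr A)).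
Proof. intros i j _ _. unfold tr, mmul. apply sum_to_ext. intros; ring. Qed.
Lemma tr_idm : tr idm = idm.
Proof. unfold tr, idm. apply FunctionalExtensionality.functional_extensionality. intros i.
  apply FunctionalExtensionality.functional_extensionality. intros j. rewrite Nat.eqb_sym. auto. Qed.
Lemma meq_tr_id d : meq d (tr idm) idm.
Proof. rewrite tr_idm. apply meq_refl. Qed.
Lemma mmul_diag d A w i j : (j < d)%nat -> mmul d A (diagm w) i j = A i j * w j.
Proof.
  intros Hj. unfold mmul, diagm. rewrite (sum_to_ext _ _ (fun k => if Nat.eqb k j then A i k * w k else 0)).
  apply (sum_to_delta d j (fun k => A i k * w k)); auto. intros k _. destruct (Nat.eqb k j); ring.
Qed.

Ltac mtrans X := apply (meq_trans _ _ X).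

Lemma assoc_eq d A B C : mmul d (mmul d A B) C = mmul d A (mmul d B C).
Proof. apply FunctionalExtensionality.functional_extensionality; intros i.
  apply FunctionalExtensionality.functional_extensionality; intros j. apply mmul_assoc. Qed.

Lemma meq_cancel d P A B C : meq d (mmul d A B) idm ->
  meq d (mmul d P (mmul d A (mmul d B C))) (mmul d P C).
Proof.
  intros H. apply meq_mmul. apply meq_refl. rewrite <- assoc_eq.
  eapply meq_trans. apply meq_mmul. exact H. apply meq_refl. apply meq_id_l.
Qed.
Lemma meq_cancel0 d A B C : meq d (mmul d A B) idm -> meq d (mmul d A (mmul d B C)) C.
Proof.
  intros H. rewrite <- assoc_eq.
  eapply meq_trans. apply meq_mmul. exact H. apply meq_refl. apply meq_id_l.
Qed.

Section Facts.
Variables (d : nat) (M Minv K L Linv U : mat) (om : vec).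
Hypotheses (HMinv : is_inverse d M Minv)
  (HL : meq d M (mmul d L (tr L))) (HLinv : is_inverse d L Linv)
  (HU : orthogonal d U)
  (Hdiag : meq d (mmul d (tr U) (mmul d Linv (mmul d K (mmul d (tr Linv) U))))
                 (diagm (fun i => om i ^ 2))).

Let D := diagm (fun i => om i ^ 2).

Lemma trLinvL : meq d (mmul d (tr L) (tr Linv)) idm.
Proof. eapply meq_trans. apply meq_sym, meq_tr_mmul. eapply meq_trans. apply meq_tr. apply HLinv. apply meq_tr_id. Qed.
Lemma trLLinv : meq d (mmul d (tr Linv) (tr L)) idm.
Proof. eapply meq_trans. apply meq_sym, meq_tr_mmul. eapply meq_trans. apply meq_tr. apply HLinv. apply meq_tr_id. Qed.

Lemma factM1 : meq d (mmul d K (mmul d (tr Linv) U)) (mmul d (mmul d L U) D).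
Proof.
  apply meq_sym. eapply meq_trans. apply meq_mmul. apply meq_refl. apply meq_sym, Hdiag.
  rewrite !assoc_eq. eapply meq_trans. apply meq_cancel. apply HU.
  apply meq_cancel0. apply HLinv.
Qed.

Lemma factM2 : meq d K (mmul d (mmul d (mmul d L U) D) (mmul d (tr U) (tr L))).
Proof.
  apply meq_sym. eapply meq_trans. apply meq_mmul. apply meq_sym, factM1. apply meq_refl.
  rewrite !assoc_eq. eapply meq_trans. apply meq_mmul. apply meq_refl. apply meq_cancel. apply HU.
  eapply meq_trans. apply meq_mmul. apply meq_refl. apply trLLinv. apply meq_id_r.
Qed.

Lemma factM3 : meq d (mmul d (mmul d (tr U) (tr L)) (mmul d (tr Linv) U)) idm.
Proof.
  rewrite !assoc_eq. eapply meq_trans. apply meq_cancel. apply trLinvL. apply HU.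
Qed.

Lemma factM4 : meq d (mmul d Minv L) (tr Linv).
Proof.
  eapply meq_trans. apply meq_mmul. apply meq_refl. apply meq_sym. apply meq_id_r.
  eapply meq_trans. apply meq_mmul. apply meq_refl. apply meq_mmul. apply meq_refl. apply meq_sym, trLinvL.
  rewrite <- !assoc_eq. rewrite (assoc_eq d Minv L (tr L)).
  eapply meq_trans. apply meq_mmul. apply meq_mmul. apply meq_refl. apply meq_sym, HL. apply meq_refl.
  eapply meq_trans. apply meq_mmul. apply (proj2 HMinv). apply meq_refl. apply meq_id_l.
Qed.

Lemma factM5 : meq d Minv (mmul d (tr Linv) Linv).
Proof.
  eapply meq_trans. apply meq_sym. apply meq_id_r.
  eapply meq_trans. apply meq_mmul. apply meq_refl. apply meq_sym, (proj1 HLinv).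
  rewrite <- assoc_eq. apply meq_mmul. apply factM4. apply meq_refl.
Qed.

Lemma factM6 : meq d (mmul d (mmul d (tr U) Linv) (mmul d L U)) idm.
Proof.
  rewrite !assoc_eq. eapply meq_trans. apply meq_cancel. apply HLinv. apply HU.
Qed.
End Facts.

Definition lin (n : nat) (a x : vec) : R := sum_to n (fun k => a k * x k).

Lemma quad_meq d A B x : meq d A B -> quad d A x = quad d B x.
Proof. intros H. unfold quad, mvec. apply sum_to_ext. intros i Hi. f_equal. apply sum_to_ext. intros k Hk. rewrite H; auto. Qed.

Lemma quad_outer n m (f g : nat -> vec) x :
  quad n (fun a b => sum_to m (fun i => f i a * g i b)) x = sum_to m (fun i => lin n (f i) x * lin n (g i) x).
Proof.
  unfold quad, mvec, lin.
  rewrite (sum_to_ext n _ (fun a => sum_to m (fun i => sum_to n (fun b => x a * f i a * (g i b * x b))))).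
  2:{ intros a _. rewrite <- sum_to_scal. rewrite <- sum_to_swap. apply sum_to_ext. intros b _.
      rewrite <- sum_to_scal_r. rewrite <- sum_to_scal. apply sum_to_ext. intros; ring. }
  rewrite sum_to_swap. apply sum_to_ext. intros i _.
  rewrite <- sum_to_scal_r. apply sum_to_ext. intros a _. rewrite <- sum_to_scal. apply sum_to_ext; intros; ring.
Qed.

Lemma modalQ_eq d L U om q i : modalQ d L U om q i = om i * lin d (fun k => mmul d L U k i) q.
Proof.
  unfold modalQ, mvec, lin, mmul, tr. f_equal.
  rewrite (sum_to_ext _ _ (fun l => sum_to d (fun k => U l i * L k l * q k))).
  2:{ intros. rewrite <- sum_to_scal. apply sum_to_ext; intros; ring. }
  rewrite sum_to_swap. apply sum_to_ext. intros. rewrite <- sum_to_scal_r. apply sum_to_ext; intros; ring.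
Qed.

Lemma modalP_eq d Linv U p i : modalP d Linv U p i = lin d (fun k => mmul d (tr U) Linv i k) p.
Proof.
  unfold modalP, mvec, lin, mmul, tr.
  rewrite (sum_to_ext _ _ (fun l => sum_to d (fun k => U l i * Linv l k * p k))).
  2:{ intros. rewrite <- sum_to_scal. apply sum_to_ext; intros; ring. }
  rewrite sum_to_swap. apply sum_to_ext. intros. rewrite <- sum_to_scal_r. apply sum_to_ext; intros; ring.
Qed.

Lemma quad_idm d y : quad d idm y = sum_to d (fun a => y a * y a).
Proof.
  unfold quad, mvec. apply sum_to_ext. intros a Ha. f_equal.
  rewrite (sum_to_ext _ _ (fun b => if Nat.eqb a b then y b else 0)).
  apply (sum_to_delta' d a y); auto. intros b _; unfold idm; destruct (Nat.eqb a b); ring.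
Qed.

Section HFacts.
Variables (d : nat) (M Minv K L Linv U : mat) (om : vec).
Hypotheses (HMinv : is_inverse d M Minv)
  (HL : meq d M (mmul d L (tr L))) (HLinv : is_inverse d L Linv)
  (HU : orthogonal d U)
  (Hdiag : meq d (mmul d (tr U) (mmul d Linv (mmul d K (mmul d (tr Linv) U))))
                 (diagm (fun i => om i ^ 2))).

Lemma quadK_modal q : quad d K q = sum_to d (fun i => modalQ d L U om q i * modalQ d L U om q i).
Proof.
  rewrite (quad_meq d K _ q (factM2 d K L Linv U om HLinv HU Hdiag)).
  rewrite (quad_meq d _ (fun a b => sum_to d (fun i => (om i ^ 2 * mmul d L U a i) * mmul d L U b i))).
  - rewrite quad_outer. apply sum_to_ext. intros i _. rewrite !modalQ_eq.
    unfold lin. rewrite (sum_to_ext _ _ (fun k => om i ^ 2 * (mmul d L U k i * q k))) by (intros; ring).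
    rewrite sum_to_scal. simpl. ring.
  - intros a b Ha Hb. unfold mmul at 1. apply sum_to_ext. intros i Hi.
    rewrite mmul_diag by auto. unfold mmul at 2. unfold tr. f_equal. ring.
    apply sum_to_ext. intros; ring.
Qed.

Lemma quadMinv_modal p : quad d Minv p = sum_to d (fun i => modalP d Linv U p i * modalP d Linv U p i).
Proof.
  rewrite (quad_meq d Minv _ p (factM5 d M Minv L Linv HMinv HL HLinv)).
  set (y := fun l => lin d (Linv l) p).
  rewrite (quad_meq d _ (fun a b => sum_to d (fun l => Linv l a * Linv l b))) by (intros a b _ _; reflexivity).
  rewrite quad_outer. fold y.
  transitivity (quad d idm y). rewrite quad_idm. reflexivity.
  rewrite <- (quad_meq d _ _ y (proj2 HU)).
  rewrite (quad_meq d _ (fun a b => sum_to d (fun i => U a i * U b i))) by (intros a b _ _; reflexivity).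
  rewrite quad_outer. apply sum_to_ext. intros i _. rewrite modalP_eq.
  assert (E : lin d (fun k => mmul d (tr U) Linv i k) p = lin d (fun a => U a i) y).
  { unfold lin, y, mmul, tr.
    rewrite (sum_to_ext _ (fun k => _ * p k) (fun k => sum_to d (fun l => U l i * Linv l k * p k))).
    2:{ intros. rewrite <- sum_to_scal_r. auto. }
    rewrite sum_to_swap. apply sum_to_ext. intros. unfold lin. rewrite <- sum_to_scal. apply sum_to_ext; intros; ring. }
  rewrite E. auto.
Qed.

Lemma ham_modal z : hamiltonian d Minv K z =
  / 2 * sum_to d (fun i => modalQ d L U om (fst z) i ^ 2 + modalP d Linv U (snd z) i ^ 2).
Proof.
  unfold hamiltonian. rewrite quadK_modal, quadMinv_modal. rewrite sum_to_plus. simpl.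
  rewrite (sum_to_ext _ (fun i => _ * (_ * 1)) (fun i => modalQ d L U om (fst z) i * modalQ d L U om (fst z) i)) by (intros; ring).
  rewrite (sum_to_ext _ (fun i => modalP d Linv U (snd z) i * (_ * 1)) (fun i => modalP d Linv U (snd z) i * modalP d Linv U (snd z) i)) by (intros; ring).
  ring.
Qed.
End HFacts.


Lemma iter_val n f l l' : iter_int n f l -> l = l' -> iter_int n f l'.
Proof. intros H <-; auto. Qed.

Section Iter.
Variables (d : nat) (L Linv U : mat) (om : vec) (theta chi : R -> R) (h : R) (psi : state -> state).
Hypothesis (Hchi0 : forall i, (i < d)%nat -> chi (om i * h) <> 0).
Hypothesis (Hpsi : forall z : state, forall i, (i < d)%nat ->
      modalQ d L U om (fst (psi z)) i =
        Mtilde_Q theta chi (om i * h)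
          (modalQ d L U om (fst z) i) (modalP d Linv U (snd z) i) /\
      modalP d Linv U (snd (psi z)) i =
        Mtilde_P theta chi (om i * h)
          (modalQ d L U om (fst z) i) (modalP d Linv U (snd z) i)).

Lemma iter_modal n z i : (i < d)%nat ->
  modalQ d L U om (fst (Nat.iter n psi z)) i = cos (INR n * theta (om i * h)) * modalQ d L U om (fst z) i + chi (om i * h) * sin (INR n * theta (om i * h)) * modalP d Linv U (snd z) i /\
  modalP d Linv U (snd (Nat.iter n psi z)) i = - / chi (om i * h) * sin (INR n * theta (om i * h)) * modalQ d L U om (fst z) i + cos (INR n * theta (om i * h)) * modalP d Linv U (snd z) i.
Proof.
  intros Hi. induction n.
  - simpl. rewrite Rmult_0_l, cos_0, sin_0. split; ring.
  - simpl Nat.iter. destruct (Hpsi (Nat.iter n psi z) i Hi) as [E1 E2].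
    rewrite E1, E2. destruct IHn as [I1 I2]. rewrite I1, I2. unfold Mtilde_Q, Mtilde_P.
    rewrite S_INR. replace ((INR n + 1) * theta (om i * h)) with (INR n * theta (om i * h) + theta (om i * h)) by ring.
    rewrite cos_plus, sin_plus.
    assert (chi (om i * h) <> 0) by (apply Hchi0; auto).
    split; field; auto.
Qed.
End Iter.

Definition blk (d : nat) (K Minv : mat) : mat := fun a b =>
  if Nat.ltb a d then (if Nat.ltb b d then K a b / 2 else 0)
  else (if Nat.ltb b d then 0 else Minv (a - d)%nat (b - d)%nat / 2).

Lemma blk11 d K Minv a b : (a < d)%nat -> (b < d)%nat -> blk d K Minv a b = K a b / 2.
Proof. intros. unfold blk. destruct (Nat.ltb_spec a d); [|lia]. destruct (Nat.ltb_spec b d); [|lia]. auto. Qed.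
Lemma blk12 d K Minv a b : (a < d)%nat -> blk d K Minv a (d + b)%nat = 0.
Proof. intros. unfold blk. destruct (Nat.ltb_spec a d); [|lia]. destruct (Nat.ltb_spec (d+b) d); [lia|]. auto. Qed.
Lemma blk21 d K Minv a b : (b < d)%nat -> blk d K Minv (d + a)%nat b = 0.
Proof. intros. unfold blk. destruct (Nat.ltb_spec (d+a) d); [lia|]. destruct (Nat.ltb_spec b d); [|lia]. auto. Qed.
Lemma blk22 d K Minv a b : blk d K Minv (d + a)%nat (d + b)%nat = Minv a b / 2.
Proof. unfold blk. destruct (Nat.ltb_spec (d+a) d); [lia|]. destruct (Nat.ltb_spec (d+b) d); [lia|].
  replace (d + a - d)%nat with a by lia. replace (d + b - d)%nat with b by lia. auto. Qed.

Lemma mvec_blk1 d K Minv c l : (l < d)%nat -> mvec (d + d)%nat (blk d K Minv) c l = / 2 * mvec d K c l.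
Proof.
  intros Hl. unfold mvec. rewrite sum_to_add.
  rewrite (sum_to_ext d (fun i => blk d K Minv l (d + i)%nat * c (d + i)%nat) (fun _ => 0)) by (intros; rewrite blk12; auto; ring).
  rewrite sum_to_zero. rewrite <- sum_to_scal. rewrite Rplus_0_r. apply sum_to_ext. intros. rewrite blk11 by auto. field.
Qed.
Lemma mvec_blk2 d K Minv c l : mvec (d + d)%nat (blk d K Minv) c (d + l)%nat = / 2 * mvec d Minv (fun k => c (d + k)%nat) l.
Proof.
  unfold mvec. rewrite sum_to_add.
  rewrite (sum_to_ext d (fun i => blk d K Minv (d + l)%nat i * c i) (fun _ => 0)) by (intros; rewrite blk21; auto; ring).
  rewrite sum_to_zero. rewrite <- sum_to_scal. rewrite Rplus_0_l. apply sum_to_ext. intros. rewrite blk22. field.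
Qed.

Lemma quad_blk d K Minv x : quad (d + d)%nat (blk d K Minv) x = / 2 * quad d K x + / 2 * quad d Minv (fun k => x (d + k)%nat).
Proof.
  unfold quad. rewrite sum_to_add.
  rewrite (sum_to_ext d (fun i => x i * mvec (d + d)%nat (blk d K Minv) x i) (fun i => / 2 * (x i * mvec d K x i))) by (intros; rewrite mvec_blk1; auto; ring).
  rewrite (sum_to_ext d (fun i => x (d + i)%nat * mvec (d + d)%nat (blk d K Minv) x (d + i)%nat) (fun i => / 2 * (x (d + i)%nat * mvec d Minv (fun k => x (d + k)%nat) i))) by (intros; rewrite mvec_blk2; auto; ring).
  rewrite !sum_to_scal. auto.
Qed.

Lemma blk_sym d K Minv : symmetric d K -> symmetric d Minv -> symmetric (d + d)%nat (blk d K Minv).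
Proof.
  intros HK HM a b Ha Hb. unfold blk.
  destruct (Nat.ltb_spec a d), (Nat.ltb_spec b d); auto.
  rewrite HK by auto. auto. rewrite HM by lia. auto.
Qed.

Lemma quad_zero d A x : (forall i, (i < d)%nat -> x i = 0) -> quad d A x = 0.
Proof. intros H. unfold quad. rewrite (sum_to_ext _ _ (fun _ => 0)). apply sum_to_zero. intros i Hi. rewrite H; auto; ring. Qed.

Lemma posdef_nonneg d A x : pos_def d A -> 0 <= quad d A x.
Proof.
  intros HP. destruct (Classical_Prop.classic (exists i, (i < d)%nat /\ x i <> 0)) as [E|E].
  - left. apply HP; auto.
  - right. symmetry. apply quad_zero. intros i Hi. apply Classical_Prop.NNPP. intros C. apply E. eauto.
Qed.

Lemma blk_pd d K Minv : pos_def d K -> pos_def d Minv -> pos_def (d + d)%nat (blk d K Minv).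
Proof.
  intros HK HM x [i [Hi Hx]]. rewrite quad_blk.
  pose proof (posdef_nonneg d K x HK). pose proof (posdef_nonneg d Minv (fun k => x (d + k)%nat) HM).
  destruct (Nat.ltb_spec i d).
  - assert (0 < quad d K x) by (apply HK; eauto). lra.
  - assert (0 < quad d Minv (fun k => x (d + k)%nat)).
    { apply HM. exists (i - d)%nat. split. lia. replace (d + (i - d))%nat with i by lia. auto. }
    lra.
Qed.

Definition E2 (n : nat) (Sg : mat) (a b : vec) : R := sum_to n (fun k => sum_to n (fun l => a k * b l * Sg k l)).

Lemma E_rule n S2 Sg a b c : symmetric n S2 -> symmetric n Sg ->
  (forall i j, (i < n)%nat -> (j < n)%nat -> sum_to n (fun k => S2 i k * Sg k j) = if Nat.eqb i j then / 2 else 0) ->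
  (forall l, (l < n)%nat -> b l = 2 * mvec n S2 c l) ->
  E2 n Sg a b = sum_to n (fun k => a k * c k).
Proof.
  intros HS HSg HSS Hb. unfold E2. apply sum_to_ext. intros k Hk.
  rewrite (sum_to_ext _ _ (fun l => a k * (2 * sum_to n (fun m => S2 l m * c m) * Sg k l))).
  2:{ intros l Hl. rewrite Hb by auto. unfold mvec. ring. }
  rewrite sum_to_scal.
  rewrite (sum_to_ext _ _ (fun l => sum_to n (fun m => 2 * c m * (S2 m l * Sg l k)))).
  2:{ intros l Hl. transitivity ((2 * Sg k l) * sum_to n (fun m => S2 l m * c m)). ring.
      rewrite <- sum_to_scal. apply sum_to_ext. intros m Hm. rewrite (HS l m), (HSg k l) by auto. ring. }
  rewrite sum_to_swap.
  rewrite (sum_to_ext _ _ (fun m => if Nat.eqb k m then c m else 0)).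
  - rewrite (sum_to_delta' n k c Hk). auto.
  - intros m Hm. rewrite sum_to_scal. rewrite HSS by auto. rewrite (Nat.eqb_sym m k). destruct (Nat.eqb k m); field.
Qed.

Lemma frob_plus n A B Sg : frob n (fun a b => A a b + B a b) Sg = frob n A Sg + frob n B Sg.
Proof. unfold frob. rewrite <- sum_to_plus. apply sum_to_ext. intros. rewrite <- sum_to_plus. apply sum_to_ext. intros; ring. Qed.
Lemma quad_plus n A B x : quad n (fun a b => A a b + B a b) x = quad n A x + quad n B x.
Proof. unfold quad, mvec. rewrite <- sum_to_plus. apply sum_to_ext. intros. rewrite <- Rmult_plus_distr_l, <- sum_to_plus. f_equal. apply sum_to_ext. intros; ring. Qed.
Lemma frob_outer n m (f g : nat -> vec) Sg :
  frob n (fun a b => sum_to m (fun i => f i a * g i b)) Sg = sum_to m (fun i => E2 n Sg (f i) (g i)).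
Proof.
  unfold frob, E2.
  rewrite (sum_to_ext _ _ (fun a => sum_to m (fun i => sum_to n (fun b => f i a * g i b * Sg a b)))).
  2:{ intros a _. rewrite <- sum_to_swap. apply sum_to_ext. intros. rewrite <- sum_to_scal_r. auto. }
  rewrite sum_to_swap. auto.
Qed.
Lemma E2_scal n Sg c a b : E2 n Sg (fun k => c * a k) b = c * E2 n Sg a b.
Proof. unfold E2. rewrite <- sum_to_scal. apply sum_to_ext. intros. rewrite <- sum_to_scal. apply sum_to_ext. intros; ring. Qed.

Lemma sumsq_pos n y : (exists l, (l < n)%nat /\ y l <> 0) -> 0 < sum_to n (fun l => y l * y l).
Proof.
  induction n; intros [l [Hl Hy]]; [lia|]. simpl.
  assert (0 <= sum_to n (fun l => y l * y l)) by (apply sum_to_nonneg; intros; nra).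
  destruct (Nat.eq_dec l n).
  - subst. assert (0 < y n * y n) by nra. lra.
  - assert (0 < sum_to n (fun l => y l * y l)) by (apply IHn; exists l; split; [lia|auto]). nra.
Qed.

Section Vecs.
Variables (d : nat) (M Minv K L Linv U : mat) (om : vec).
Hypotheses (HMinv : is_inverse d M Minv)
  (HL : meq d M (mmul d L (tr L))) (HLinv : is_inverse d L Linv)
  (HU : orthogonal d U)
  (Hom : forall i, (i < d)%nat -> 0 < om i)
  (Hdiag : meq d (mmul d (tr U) (mmul d Linv (mmul d K (mmul d (tr Linv) U))))
                 (diagm (fun i => om i ^ 2))).

Definition aQ (i k : nat) : R := if Nat.ltb k d then om i * mmul d L U k i else 0.
Definition aP (i k : nat) : R := if Nat.ltb k d then 0 else mmul d (tr U) Linv i (k - d)%nat.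
Definition cQ (i k : nat) : R := if Nat.ltb k d then mmul d (tr Linv) U k i / om i else 0.
Definition cP (i k : nat) : R := if Nat.ltb k d then 0 else mmul d L U (k - d)%nat i.

Lemma lt_d k : (k < d)%nat -> Nat.ltb k d = true.
Proof. intros; apply Nat.ltb_lt; auto. Qed.
Lemma ge_d k : Nat.ltb (d + k) d = false.
Proof. apply Nat.ltb_ge; lia. Qed.
Lemma dk k : (d + k - d)%nat = k.
Proof. lia. Qed.

Lemma lin_aQ i x : lin (d + d) (aQ i) x = modalQ d L U om x i.
Proof.
  rewrite modalQ_eq. unfold lin. rewrite sum_to_add.
  rewrite (sum_to_ext d (fun k => aQ i (d + k)%nat * x (d + k)%nat) (fun _ => 0)) by (intros; unfold aQ; rewrite ge_d; ring).
  rewrite sum_to_zero, Rplus_0_r. rewrite <- sum_to_scal. apply sum_to_ext. intros k Hk. unfold aQ. rewrite lt_d by auto. ring.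
Qed.

Lemma lin_aP i x : lin (d + d) (aP i) x = modalP d Linv U (fun k => x (d + k)%nat) i.
Proof.
  rewrite modalP_eq. unfold lin. rewrite sum_to_add.
  rewrite (sum_to_ext d (fun k => aP i k * x k) (fun _ => 0)) by (intros; unfold aP; rewrite lt_d by auto; ring).
  rewrite sum_to_zero, Rplus_0_l. apply sum_to_ext. intros k Hk. unfold aP. rewrite ge_d, dk. auto.
Qed.

Lemma Minv_sym : symmetric d Minv.
Proof.
  intros a b Ha Hb. rewrite (factM5 d M Minv L Linv HMinv HL HLinv) by auto.
  rewrite (factM5 d M Minv L Linv HMinv HL HLinv) by auto. unfold mmul, tr. apply sum_to_ext; intros; ring.
Qed.

Lemma Minv_pd : pos_def d Minv.
Proof.
  intros p [i [Hi Hp]].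
  rewrite (quad_meq d Minv _ p (factM5 d M Minv L Linv HMinv HL HLinv)).
  rewrite (quad_meq d _ (fun a b => sum_to d (fun l => Linv l a * Linv l b))) by (intros a b _ _; reflexivity).
  rewrite quad_outer. apply (sumsq_pos d (fun l => lin d (Linv l) p)).
  apply Classical_Prop.NNPP. intros C. apply Hp.
  assert (Hy : forall l, (l < d)%nat -> lin d (Linv l) p = 0).
  { intros l Hl. apply Classical_Prop.NNPP. intros C'. apply C. eauto. }
  transitivity (sum_to d (fun j => mmul d L Linv i j * p j)).
  - rewrite (sum_to_ext _ _ (fun j => if Nat.eqb i j then p j else 0)).
    symmetry. apply (sum_to_delta' d i p Hi).
    intros j Hj. rewrite (proj1 HLinv) by auto. unfold idm. destruct (Nat.eqb i j); ring.
  - unfold mmul. rewrite (sum_to_ext _ _ (fun j => sum_to d (fun l => L i l * Linv l j * p j))) by (intros; rewrite <- sum_to_scal_r; auto).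
    rewrite sum_to_swap. rewrite (sum_to_ext _ _ (fun _ => 0)). apply sum_to_zero.
    intros l Hl. rewrite <- (Rmult_0_r (L i l)). rewrite <- (Hy l Hl). unfold lin. rewrite <- sum_to_scal. apply sum_to_ext; intros; ring.
Qed.

Lemma bQ i : (i < d)%nat -> forall l, (l < d + d)%nat -> aQ i l = 2 * mvec (d + d) (blk d K Minv) (cQ i) l.
Proof.
  intros Hi l Hl. destruct (Nat.ltb_spec l d).
  - rewrite mvec_blk1 by auto. unfold aQ. rewrite lt_d by auto.
    assert (E : mvec d K (cQ i) l = mmul d K (mmul d (tr Linv) U) l i / om i).
    { unfold mvec, mmul at 1. unfold Rdiv. rewrite <- sum_to_scal_r. apply sum_to_ext. intros m Hm. unfold cQ. rewrite lt_d by auto. unfold Rdiv. ring. }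
    rewrite E. rewrite (factM1 d K L Linv U om HLinv HU Hdiag) by auto. rewrite mmul_diag by auto.
    assert (0 < om i) by auto. field. lra.
  - replace l with (d + (l - d))%nat by lia. rewrite mvec_blk2. unfold aQ. rewrite ge_d.
    unfold mvec. rewrite (sum_to_ext _ _ (fun _ => 0)). rewrite sum_to_zero. ring.
    intros k Hk. unfold cQ. rewrite ge_d. ring.
Qed.

Lemma bP i : (i < d)%nat -> forall l, (l < d + d)%nat -> aP i l = 2 * mvec (d + d) (blk d K Minv) (cP i) l.
Proof.
  intros Hi l Hl. destruct (Nat.ltb_spec l d).
  - rewrite mvec_blk1 by auto. unfold aP. rewrite lt_d by auto.
    unfold mvec. rewrite (sum_to_ext _ _ (fun _ => 0)). rewrite sum_to_zero. ring.
    intros k Hk. unfold cP. rewrite lt_d by auto. ring.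
  - replace l with (d + (l - d))%nat by lia. set (l' := (l - d)%nat). rewrite mvec_blk2. unfold aP. rewrite ge_d, dk.
    assert (E : mvec d Minv (fun k => cP i (d + k)%nat) l' = mmul d (mmul d Minv L) U l' i).
    { rewrite mmul_assoc. unfold mvec, mmul at 1. apply sum_to_ext. intros m Hm. unfold cP. rewrite ge_d, dk. auto. }
    rewrite E. rewrite (meq_mmul d _ _ U U (factM4 d M Minv L Linv HMinv HL HLinv) (meq_refl d U)) by lia.
    unfold mmul, tr. field_simplify. apply sum_to_ext. intros; ring.
Qed.

Lemma sQQ i : (i < d)%nat -> sum_to (d + d) (fun k => aQ i k * cQ i k) = 1.
Proof.
  intros Hi. rewrite sum_to_add.
  rewrite (sum_to_ext d (fun k => aQ i (d + k)%nat * cQ i (d + k)%nat) (fun _ => 0)) by (intros; unfold aQ; rewrite ge_d; ring).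
  rewrite sum_to_zero, Rplus_0_r.
  pose proof (factM3 d L Linv U HLinv HU i i Hi Hi) as E. unfold idm in E. rewrite Nat.eqb_refl in E.
  rewrite <- E. unfold mmul at 1. apply sum_to_ext. intros k Hk. unfold aQ, cQ. rewrite lt_d by auto.
  assert (0 < om i) by auto.
  assert (Hs : mmul d (tr U) (tr L) i k = mmul d L U k i) by (unfold mmul, tr; apply sum_to_ext; intros; ring).
  rewrite Hs. field. lra.
Qed.

Lemma sPP i : (i < d)%nat -> sum_to (d + d) (fun k => aP i k * cP i k) = 1.
Proof.
  intros Hi. rewrite sum_to_add.
  rewrite (sum_to_ext d (fun k => aP i k * cP i k) (fun _ => 0)) by (intros; unfold aP; rewrite lt_d by auto; ring).
  rewrite sum_to_zero, Rplus_0_l.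
  pose proof (factM6 d L Linv U HLinv HU i i Hi Hi) as E. unfold idm in E. rewrite Nat.eqb_refl in E.
  rewrite <- E. unfold mmul at 1. apply sum_to_ext. intros k Hk. unfold aP, cP. rewrite ge_d, dk. auto.
Qed.

Lemma sQP i : sum_to (d + d) (fun k => aQ i k * cP i k) = 0.
Proof.
  rewrite sum_to_add.
  rewrite (sum_to_ext d (fun k => aQ i (d + k)%nat * cP i (d + k)%nat) (fun _ => 0)) by (intros; unfold aQ; rewrite ge_d; ring).
  rewrite (sum_to_ext d (fun k => aQ i k * cP i k) (fun _ => 0)) by (intros; unfold cP; rewrite lt_d by auto; ring).
  rewrite sum_to_zero. ring.
Qed.
End Vecs.

Lemma quad_zeroA n x : quad n (fun _ _ => 0) x = 0.
Proof. unfold quad, mvec. rewrite (sum_to_ext _ _ (fun _ => 0)). apply sum_to_zero. intros. rewrite (sum_to_ext _ _ (fun _ => 0)) by (intros; ring). rewrite sum_to_zero; ring. Qed.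
Lemma frob_zero n Sg : frob n (fun _ _ => 0) Sg = 0.
Proof. unfold frob. rewrite (sum_to_ext _ _ (fun _ => 0)). apply sum_to_zero. intros. rewrite (sum_to_ext _ _ (fun _ => 0)) by (intros; ring). apply sum_to_zero. Qed.
Lemma lin_scal n c a x : lin n (fun k => c * a k) x = c * lin n a x.
Proof. unfold lin. rewrite <- sum_to_scal. apply sum_to_ext; intros; ring. Qed.

Theorem theorem6p2
  (d : nat) (M Minv K L Linv U : mat) (om : vec)
  (theta chi : R -> R) (h : R) (psi : state -> state)
  (HM : spd d M) (HK : spd d K) (HMinv : is_inverse d M Minv)
  (HL : meq d M (mmul d L (tr L))) (HLinv : is_inverse d L Linv)
  (HU : orthogonal d U)
  (Hom : forall i, (i < d)%nat -> 0 < om i)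
  (Hdiag : meq d (mmul d (tr U) (mmul d Linv (mmul d K (mmul d (tr Linv) U))))
                 (diagm (fun i => om i ^ 2)))
  (Hchi : forall k, 0 < k -> chi k <> 0)
  (Hh : 0 < h)
  (Hpsi : forall z : state, forall i, (i < d)%nat ->
      modalQ d L U om (fst (psi z)) i =
        Mtilde_Q theta chi (om i * h)
          (modalQ d L U om (fst z) i) (modalP d Linv U (snd z) i) /\
      modalP d Linv U (snd (psi z)) i =
        Mtilde_P theta chi (om i * h)
          (modalQ d L U om (fst z) i) (modalP d Linv U (snd z) i)) :
  forall n : nat, exists e : R,
    gauss_expect d (hamiltonian d Minv K)
      (fun z => hamiltonian d Minv K (Nat.iter n psi z) - hamiltonian d Minv K z) e /\
    0 <= e <= sum_to d (fun j => rho chi (om j * h)).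
Proof.
  intros n.
  destruct HK as [HKs HKp].
  assert (Hchi0 : forall i, (i < d)%nat -> chi (om i * h) <> 0) by (intros; apply Hchi; apply Rmult_lt_0_compat; auto).
  assert (HMs' := Minv_sym d M Minv L Linv HMinv HL HLinv).
  assert (HMp' := Minv_pd d M Minv L Linv HMinv HL HLinv).
  destruct (claim_all (d + d) (blk d K Minv) (blk_sym d K Minv HKs HMs') (blk_pd d K Minv HKp HMp'))
    as [Z [Sg [HZ [HSg [HSS HI]]]]].
  set (c := fun i => cos (INR n * theta (om i * h))).
  set (s := fun i => sin (INR n * theta (om i * h))).
  set (ch := fun i => chi (om i * h)).
  set (al := fun i => (c i ^ 2 + (s i / ch i) ^ 2 - 1) / 2).
  set (be := fun i => ((ch i * s i) ^ 2 + c i ^ 2 - 1) / 2).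
  set (ga := fun i => c i * ch i * s i - s i * c i / ch i).
  set (A := fun a b => sum_to d (fun i => (al i * aQ d L U om i a) * aQ d L U om i b) +
                       (sum_to d (fun i => (be i * aP d Linv U i a) * aP d Linv U i b) +
                        sum_to d (fun i => (ga i * aQ d L U om i a) * aP d Linv U i b))).
  set (e := sum_to d (fun i => al i + be i)).
  assert (HH : forall v, hamiltonian d Minv K (state_of_list d v) = quad (d + d) (blk d K Minv) (vl v)).
  { intros v. rewrite quad_blk. unfold hamiltonian, state_of_list, vl. simpl. ring. }
  assert (HF : forall v, hamiltonian d Minv K (Nat.iter n psi (state_of_list d v)) - hamiltonian d Minv K (state_of_list d v)
                 = polyv (d + d) A (fun _ => 0) 0 (vl v)).
  { intros v. unfold polyv. rewrite (sum_to_ext _ _ (fun _ => 0)) by (intros; ring). rewrite sum_to_zero.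
    unfold A. rewrite !quad_plus, !quad_outer.
    rewrite !(ham_modal d M Minv K L Linv U om HMinv HL HLinv HU Hdiag).
    rewrite <- Rmult_minus_distr_l, <- sum_to_minus. rewrite <- !sum_to_plus.
    rewrite !Rplus_0_r.
    transitivity (sum_to d (fun i => al i * (lin (d + d) (aQ d L U om i) (vl v) * lin (d + d) (aQ d L U om i) (vl v)) +
       (be i * (lin (d + d) (aP d Linv U i) (vl v) * lin (d + d) (aP d Linv U i) (vl v)) +
        ga i * (lin (d + d) (aQ d L U om i) (vl v) * lin (d + d) (aP d Linv U i) (vl v))))).
    2:{ apply sum_to_ext. intros i Hi. rewrite !lin_scal. ring. }
    rewrite <- sum_to_scal. apply sum_to_ext. intros i Hi.
    rewrite lin_aQ, lin_aP.
    destruct (iter_modal d L Linv U om theta chi h psi Hchi0 Hpsi n (state_of_list d v) i Hi) as [E1 E2].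
    rewrite E1, E2. unfold state_of_list, vl. simpl. fold (c i) (s i) (ch i).
    unfold al, be, ga. assert (ch i <> 0) by (apply Hchi0; auto). field. auto. }
  exists e. split.
  - exists Z, (Z * e). replace (2 * d)%nat with (d + d)%nat by lia. split; [|split; [|split]].
    + apply (iter_val _ _ (Z * (1 + frob (d + d) (fun _ _ => 0) Sg))).
      * eapply iter_int_ext; [|apply (HI (fun _ _ => 0) (fun _ => 0) 1)].
        intros v _. unfold gclass. rewrite HH. unfold polyv. rewrite quad_zeroA.
        rewrite (sum_to_ext _ _ (fun _ => 0)) by (intros; ring). rewrite sum_to_zero. ring.
      * rewrite frob_zero. ring.
    + apply (iter_val _ _ (Z * (0 + frob (d + d) A Sg))).
      * eapply iter_int_ext; [|apply (HI A (fun _ => 0) 0)].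
        intros v _. unfold gclass. rewrite <- HH, <- HF. auto.
      * f_equal. rewrite Rplus_0_l. unfold A. rewrite !frob_plus, !frob_outer. unfold e.
        rewrite <- !sum_to_plus. apply sum_to_ext. intros i Hi. rewrite !E2_scal.
        rewrite !(E_rule (d + d) (blk d K Minv) Sg _ _ _ (blk_sym d K Minv HKs HMs') HSg HSS (bQ d Minv K L Linv U om HLinv HU Hom Hdiag i Hi)).
        rewrite !(E_rule (d + d) (blk d K Minv) Sg _ _ _ (blk_sym d K Minv HKs HMs') HSg HSS (bP d M Minv K L Linv U HMinv HL HLinv i Hi)).
        rewrite (sQQ d L Linv U om HLinv HU Hom i Hi), (sPP d L Linv U HLinv HU i Hi), sQP. ring.
    + auto.
    + field. lra.
  - assert (Hb : forall i, (i < d)%nat -> al i + be i = s i ^ 2 * rho chi (om i * h)).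
    { intros i Hi. unfold al, be, rho. fold (ch i). assert (ch i <> 0) by (apply Hchi0; auto).
      assert (Hcs : c i ^ 2 = 1 - s i ^ 2).
      { unfold c, s. pose proof (sin2_cos2 (INR n * theta (om i * h))) as X. unfold Rsqr in X. simpl. nra. }
      rewrite Hcs. field. auto. }
    unfold e. split.
    + apply sum_to_nonneg. intros i Hi. rewrite Hb by auto. unfold rho.
      apply Rmult_le_pos. apply pow2_ge_0. apply Rmult_le_pos. lra. apply pow2_ge_0.
    + apply sum_to_le. intros i Hi. rewrite Hb by auto.
      assert (0 <= rho chi (om i * h)) by (unfold rho; apply Rmult_le_pos; [lra|apply pow2_ge_0]).
      assert (s i ^ 2 <= 1).
      { unfold s. pose proof (sin2_cos2 (INR n * theta (om i * h))) as X. unfold Rsqr in X. simpl.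
        pose proof (pow2_ge_0 (cos (INR n * theta (om i * h)))). simpl in *. nra. }
      nra.
Qed.
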